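(* For all graphs $G$ and $H$: $G$ and $H$ are distinguishable by EB-1WL if and only if they are distinguishable by $\mathrm{CFOC}^3$, i.e. there is a $\mathrm{CFOC}^3$ sentence $\phi$ with $G\models\phi$ and $H\not\models\phi$.
   Context: All graphs are finite, simple and undirected, without isolated vertices; $N(v)$ denotes the neighborhood of $v$. An ordered edge of $G=(V,E)$ is a pair $(u,v)$ with $\{u,v\}\in E$. EB-1WL coloring: $\mathrm{eb}^{(0)}(G,(u,v))=1$ for every ordered edge, and $\mathrm{eb}^{(\ell+1)}(G,(u,v)) = \big(\mathrm{eb}^{(\ell)}(G,(u,v)),\ \{\!\{\mathrm{eb}^{(\ell)}(G,(u,x)) : x\in N(u)\}\!\},\ \{\!\{(\mathrm{eb}^{(\ell)}(G,(u,y)),\mathrm{eb}^{(\ell)}(G,(v,y))) : y\in N(u)\cap N(v)\}\!\},\ \{\!\{\mathrm{eb}^{(\ell)}(G,(v,z)) : z\in N(v)\}\!\}\big)$. $\mathrm{eb}^{(\ell)}(G)$ is the multiset of $\mathrm{eb}^{(\ell)}(G,(u,v))$ over all ordered edges. Graphs are distinguishable by EB-1WL if they have different numbers of vertices or there is $\ell$ with $\mathrm{eb}^{(\ell)}(G)\neq\mathrm{eb}^{(\ell)}(H)$. Logic: first-order logic over the vocabulary with one binary relation $E$, where $E(x,y)$ holds of $(u,v)$ iff $\{u,v\}$ is an edge. For a tuple $\bar x=(x_1,\dots,x_n)$ of distinct variables, $\mathrm{clique}(\bar x):=\bigwedge_{1\le i<j\le n}E(x_i,x_j)$ (empty conjunction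 = true). CFOC (clique-based first-order logic with counting) is the smallest set of formulas such that: (1) $\mathrm{clique}(\bar x)$ is in CFOC for any tuple of distinct variables; (2) if $\phi(\bar x)\in$ CFOC then $\mathrm{clique}(\bar x)\wedge\neg\phi(\bar x)\in$ CFOC; (3) if $\phi(\bar x),\psi(\bar y)\in$ CFOC then $\mathrm{clique}(\bar z)\wedge(\phi(\bar x)\star\psi(\bar y))\in$ CFOC for $\star\in\{\wedge,\vee\}$, where $\bar z$ lists each variable of $\bar x$ and $\bar y$ exactly once; (4) if $\phi(\bar x,y)\in$ CFOC then $\mathrm{clique}(\bar x)\wedge\exists^{\ge k}y\,\phi(\bar x,y)\in$ CFOC for every integer $k\ge1$, where $\exists^{\ge k}y\,\phi$ means there are at least $k$ vertices $v$ such that $\phi$ holds with $y=v$. Here $\phi(\bar x)$ means the free variables of $\phi$ are exactly those in $\bar x$. $\mathrm{CFOC}^3$ consists of the CFOC formulas using at most three distinct variables; a sentence is a formula with no free variables. *)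

(* Defs.v *)
From mathcomp Require Import all_boot.
Set Implicit Arguments.
Unset Strict Implicit.
Unset Printing Implicit Defensive.

Definition simple_graph_noiso (T : finType) (e : rel T) : Prop :=
  symmetric e /\ irreflexive e /\ (forall v : T, exists w : T, e v w).

Definition nbhd (T : finType) (e : rel T) (v : T) : {set T} := [set w | e v w].

Definition oedges (T : finType) (e : rel T) : {set T * T} :=
  [set p : T * T | e p.1 p.2].

(* Colours: finite trees (a countable eqType). Multisets of colours are  *)
(* represented canonically as lists sorted by the (injective) pickle    *)
(* code, so two multisets are equal iff their encodings are equal.      *)

Definition color := GenTree.tree unit.

Definition col_le (a b : color) : bool := (pickle a <= pickle b)%N.

Definition col_one : color := GenTree.Node 0 [::].
Definition col_pair (a b : color) : color := GenTree.Node 1 [:: a; b].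
Definition col_mset (s : seq color) : color := GenTree.Node 2 (sort col_le s).
Definition col_tuple (c m1 m2 m3 : color) : color :=
  GenTree.Node 3 [:: c; m1; m2; m3].

(* EB-1WL colouring eb^(l)(G,(u,v)) (only meaningful on ordered edges) *)
Fixpoint eb (T : finType) (e : rel T) (l : nat) (u v : T) : color :=
  match l with
  | 0 => col_one
  | l'.+1 =>
      col_tuple (eb e l' u v)
        (col_mset [seq eb e l' u x | x <- enum (nbhd e u)])
        (col_mset [seq col_pair (eb e l' u y) (eb e l' v y)
                  | y <- enum (nbhd e u :&: nbhd e v)])
        (col_mset [seq eb e l' v z | z <- enum (nbhd e v)])
  end.

(* eb^(l)(G) : the multiset (as a list, compared up to permutation) *)
Definition ebG (T : finType) (e : rel T) (l : nat) : seq color :=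
  [seq eb e l p.1 p.2 | p <- enum (oedges e)].

Definition EB_distinguishable (T1 T2 : finType) (e1 : rel T1) (e2 : rel T2)
  : Prop :=
  #|T1| <> #|T2| \/ exists l : nat, ~~ perm_eq (ebG e1 l) (ebG e2 l).

Inductive fo : Type :=
| FE : nat -> nat -> fo
| FEq : nat -> nat -> fo
| FTrue : fo
| FNot : fo -> fo
| FAnd : fo -> fo -> fo
| FOr : fo -> fo -> fo
| FCnt : nat -> nat -> fo -> fo.   (* FCnt k y phi  =  exists^{>=k} y. phi *)

Fixpoint fv (f : fo) : seq nat :=
  match f with
  | FE x y => [:: x; y]
  | FEq x y => [:: x; y]
  | FTrue => [::]
  | FNot g => fv g
  | FAnd g h => fv g ++ fv h
  | FOr g h => fv g ++ fv h
  | FCnt _ y g => filter (predC1 y) (fv g)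
  end.

Fixpoint vars (f : fo) : seq nat :=
  match f with
  | FE x y => [:: x; y]
  | FEq x y => [:: x; y]
  | FTrue => [::]
  | FNot g => vars g
  | FAnd g h => vars g ++ vars h
  | FOr g h => vars g ++ vars h
  | FCnt _ y g => y :: vars g
  end.

Definition num_vars (f : fo) : nat := size (undup (vars f)).

Fixpoint bigAnd (s : seq fo) : fo :=
  match s with
  | [::] => FTrue
  | [:: a] => a
  | a :: s' => FAnd a (bigAnd s')
  end.

Fixpoint ordpairs (xs : seq nat) : seq (nat * nat) :=
  match xs with
  | [::] => [::]
  | x :: r => [seq (x, y) | y <- r] ++ ordpairs r
  end.

Definition clique (xs : seq nat) : fo :=
  bigAnd [seq FE p.1 p.2 | p <- ordpairs xs].

Inductive CFOC : fo -> Prop :=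
| CFOC_clique (xs : seq nat) :
    uniq xs -> CFOC (clique xs)
| CFOC_neg (phi : fo) (xs : seq nat) :
    CFOC phi -> uniq xs -> fv phi =i xs ->
    CFOC (FAnd (clique xs) (FNot phi))
| CFOC_and (phi psi : fo) (zs : seq nat) :
    CFOC phi -> CFOC psi -> uniq zs -> zs =i fv phi ++ fv psi ->
    CFOC (FAnd (clique zs) (FAnd phi psi))
| CFOC_or (phi psi : fo) (zs : seq nat) :
    CFOC phi -> CFOC psi -> uniq zs -> zs =i fv phi ++ fv psi ->
    CFOC (FAnd (clique zs) (FOr phi psi))
| CFOC_cnt (phi : fo) (xs : seq nat) (y : nat) (k : nat) :
    CFOC phi -> uniq (y :: xs) -> fv phi =i y :: xs -> (1 <= k)%N ->
    CFOC (FAnd (clique xs) (FCnt k y phi)).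

Definition CFOC3 (f : fo) : Prop := CFOC f /\ (num_vars f <= 3)%N.

Definition sentence (f : fo) : Prop := fv f = [::].

(* Semantics under a partial assignment (unassigned variables make
   atoms false; irrelevant for sentences, where every variable is bound
   before use). *)
Definition upd (T : Type) (a : nat -> option T) (x : nat) (v : T) :=
  fun z => if z == x then Some v else a z.

Fixpoint sat (T : finType) (e : rel T) (a : nat -> option T) (f : fo)
  : bool :=
  match f with
  | FE x y => if (a x, a y) is (Some u, Some v) then e u v else false
  | FEq x y => if (a x, a y) is (Some u, Some v) then u == v else false
  | FTrue => true
  | FNot g => ~~ sat e a g
  | FAnd g h => sat e a g && sat e a h
  | FOr g h => sat e a g || sat e a h
  | FCnt k y g => (k <= #|[pred v : T | sat e (upd a y v) g]|)%N
  end.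

Definition models (T : finType) (e : rel T) (f : fo) : bool :=
  sat e (fun _ => None) f.

Definition CFOC3_distinguishable (T1 T2 : finType) (e1 : rel T1)
  (e2 : rel T2) : Prop :=
  exists phi : fo, CFOC3 phi /\ sentence phi /\ models e1 phi /\
                   ~~ models e2 phi.

(* Main.v *)
Require Import Defs.
From mathcomp Require Import all_boot.
From Stdlib Require Import Classical.
Set Implicit Arguments. Unset Strict Implicit. Unset Printing Implicit Defensive.


Lemma col_le_total : total col_le.
Proof. by move=> a b; rewrite /col_le leq_total. Qed.
Lemma col_le_trans : transitive col_le.
Proof. by move=> a b c; rewrite /col_le; apply: leq_trans. Qed.
Lemma col_le_anti : antisymmetric col_le.
Proof. move=> a b; rewrite /col_le -eqn_leq => /eqP H. have := congr1 (@unpickle color) H. by rewrite !pickleK; case. Qed.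

Lemma col_mset_eq s t : (col_mset s = col_mset t) <-> perm_eq s t.
Proof.
split.
- by case=> H; apply/(perm_sortP col_le_total col_le_trans col_le_anti).
- by move/(perm_sortP col_le_total col_le_trans col_le_anti)=> H; rewrite /col_mset H.
Qed.

Lemma count_enum_card (T:finType)(A: {pred T}) (P:pred T):
  count P (enum A) = #|[pred x | (x \in A) && P x]|.
Proof.
have := filter_uniq P (enum_uniq A); move/card_uniqP; rewrite size_filter => <-.
by apply: eq_card => x; rewrite mem_filter mem_enum andbC.
Qed.


Lemma count_transfer (A B C : eqType) (s1 : seq A) (s2 : seq B) (f1 : A -> C) (f2 : B -> C)
  (P1 : pred A) (P2 : pred B) :
  perm_eq (map f1 s1) (map f2 s2) ->
  (forall x y, x \in s1 -> y \in s2 -> f1 x = f2 y -> P1 x = P2 y) ->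
  count P1 s1 = count P2 s2.
Proof.
move=> Hp H.
pose Q c := has (fun x => (f1 x == c) && P1 x) s1.
have H1 : count P1 s1 = count (fun x => Q (f1 x)) s1.
  apply: eq_in_count => x xs /=.
  have : f1 x \in map f2 s2 by rewrite -(perm_mem Hp) map_f.
  case/mapP=> y ys Hy.
  apply/idP/hasP => [Px|[x' x's /andP[/eqP Hx' Px']]]; first by exists x; rewrite ?eqxx.
  by rewrite (H x y) // -(H x' y) // Hx'.
have H2 : count P2 s2 = count (fun y => Q (f2 y)) s2.
  apply: eq_in_count => y ys /=.
  have : f2 y \in map f1 s1 by rewrite (perm_mem Hp) map_f.
  case/mapP=> x xs Hx.
  apply/idP/hasP => [Py|[x' x's /andP[/eqP Hx' Px']]].
    by exists x => //; rewrite -Hx eqxx /= (H x y).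
  by rewrite -(H x' y).
rewrite H1 H2 -(count_map f1 Q) -(count_map f2 Q).
by apply/permP.
Qed.

Lemma card_count (T : finType) (P : pred T) : #|[pred x | P x]| = count P (enum T).
Proof. by rewrite count_enum_card; apply: eq_card => x. Qed.

Lemma sat_bigAnd (T : finType) (e : rel T) a s : sat e a (bigAnd s) = all (sat e a) s.
Proof. elim: s => [|f s IH] //; case: s IH => [|g s] IH; first by rewrite /= andbT.
by rewrite [bigAnd _]/= [sat _ _ _]/= IH. Qed.

Lemma fv_bigAnd s x : (x \in fv (bigAnd s)) = has (fun f => x \in fv f) s.
Proof. elim: s => [|f s IH] //; case: s IH => [|g s] IH; first by rewrite /= orbF.
by rewrite [bigAnd _]/= [fv _]/= mem_cat IH. Qed.

Lemma vars_bigAnd s x : (x \in vars (bigAnd s)) = has (fun f => x \in vars f) s.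
Proof. elim: s => [|f s IH] //; case: s IH => [|g s] IH; first by rewrite /= orbF.
by rewrite [bigAnd _]/= [vars _]/= mem_cat IH. Qed.

Fixpoint qd (f : fo) : nat :=
  match f with
  | FNot g => qd g
  | FAnd g h => maxn (qd g) (qd h)
  | FOr g h => maxn (qd g) (qd h)
  | FCnt _ _ g => (qd g).+1
  | _ => 0
  end.

Lemma qd_bigAnd s : all (fun f => qd f == 0) s -> qd (bigAnd s) = 0.
Proof. elim: s => [|f s IH] //; case: s IH => [|g s] IH; first by rewrite /= andbT => /eqP.
by case/andP=> /eqP H1 H; rewrite [bigAnd _]/= [qd _]/= H1 IH. Qed.

Lemma qd_clique xs : qd (clique xs) = 0.
Proof. rewrite /clique qd_bigAnd // all_map; by apply/allP => p. Qed.

Lemma ordpairs_mem xs p : p \in ordpairs xs -> (p.1 \in xs) && (p.2 \in xs).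
Proof.
elim: xs => [|x r IH] //=; rewrite mem_cat => /orP [/mapP [y yr ->]|/IH /andP[H1 H2]].
  by rewrite /= !inE eqxx yr orbT.
by rewrite !inE H1 H2 !orbT.
Qed.

Lemma ordpairs_neq xs p : uniq xs -> p \in ordpairs xs -> p.1 != p.2.
Proof.
elim: xs => [|x r IH] //= /andP [xr ur]; rewrite mem_cat => /orP [/mapP [y yr ->]|/IH -> //].
by apply/eqP => /= E; rewrite E yr in xr.
Qed.

Lemma ordpairs_cover xs x y : uniq xs -> x \in xs -> y \in xs -> x != y ->
  ((x, y) \in ordpairs xs) || ((y, x) \in ordpairs xs).
Proof.
elim: xs => [|z r IH] //= /andP [zr ur]; rewrite !inE => /orP[/eqP->|xr] /orP[/eqP->|yr].
- by rewrite eqxx.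
- by move=> _; rewrite mem_cat (map_f (fun y => (z, y)) yr).
- by move=> _; rewrite !mem_cat (map_f (fun y => (z, y)) xr) orbT.
- by move=> H; rewrite !mem_cat; case/orP: (IH ur xr yr H) => ->; rewrite !orbT.
Qed.

Lemma fv_clique xs x : x \in fv (clique xs) -> x \in xs.
Proof.
rewrite /clique fv_bigAnd has_map => /hasP [p /ordpairs_mem /andP[H1 H2]].
by rewrite /= !inE => /orP[/eqP->|/eqP->].
Qed.

Lemma vars_clique xs x : x \in vars (clique xs) -> x \in xs.
Proof.
rewrite /clique vars_bigAnd has_map => /hasP [p /ordpairs_mem /andP[H1 H2]].
by rewrite /= !inE => /orP[/eqP->|/eqP->].
Qed.

Lemma fv_vars f x : x \in fv f -> x \in vars f.
Proof.
elim: f => //= [g IHg h IHh|g IHg h IHh|k y g IH]; rewrite ?mem_cat.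
- by case/orP => [/IHg|/IHh] ->; rewrite ?orbT.
- by case/orP => [/IHg|/IHh] ->; rewrite ?orbT.
- by rewrite mem_filter inE => /andP[_ /IH H]; rewrite in_cons H orbT.
Qed.

Lemma sat_clique_edge (T : finType) (e : rel T) a xs p :
  sat e a (clique xs) -> p \in ordpairs xs ->
  exists u v, [/\ a p.1 = Some u, a p.2 = Some v & e u v].
Proof.
rewrite /clique sat_bigAnd all_map => /allP H pin.
have := H _ pin; rewrite /=.
case: (a p.1) => [u|] //; case: (a p.2) => [v|] // Huv; by exists u, v.
Qed.

Lemma sat_clique_pairs (T : finType) (e : rel T) a xs x y :
  symmetric e -> uniq xs -> sat e a (clique xs) -> x \in xs -> y \in xs -> x != y ->
  exists u v, [/\ a x = Some u, a y = Some v & e u v].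
Proof.
move=> es uxs H xin yin nxy.
case/orP: (ordpairs_cover uxs xin yin nxy) => /(sat_clique_edge H) [u [v [H1 H2 H3]]].
  by exists u, v.
by exists v, u; rewrite es.
Qed.

Lemma CFOC_guard (T : finType) (e : rel T) a f x y : symmetric e -> CFOC f -> sat e a f ->
  x \in fv f -> y \in fv f -> x != y ->
  exists u v, [/\ a x = Some u, a y = Some v & e u v].
Proof.
move=> es; case => [xs uxs|phi xs _ uxs Hfv|phi psi zs _ _ uzs Hfv|phi psi zs _ _ uzs Hfv
  |phi xs y' k _ uxs Hfv _] /=.
- by move=> H /fv_clique xin /fv_clique yin; exact: (sat_clique_pairs es uxs H xin yin).
- case/andP => H _; rewrite !mem_cat => xin yin; apply: (sat_clique_pairs es uxs H) => //.
  + by case/orP: xin => [/fv_clique|]; rewrite ?Hfv => ?.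
  + by case/orP: yin => [/fv_clique|]; rewrite ?Hfv => ?.
- case/andP => H _; rewrite !mem_cat => xin yin; apply: (sat_clique_pairs es uzs H) => //.
  + by case/orP: xin => [/fv_clique|]; rewrite ?Hfv ?mem_cat => ?; rewrite ?orbT.
  + by case/orP: yin => [/fv_clique|]; rewrite ?Hfv ?mem_cat => ?; rewrite ?orbT.
- case/andP => H _; rewrite !mem_cat => xin yin; apply: (sat_clique_pairs es uzs H) => //.
  + by case/orP: xin => [/fv_clique|]; rewrite ?Hfv ?mem_cat => ?; rewrite ?orbT.
  + by case/orP: yin => [/fv_clique|]; rewrite ?Hfv ?mem_cat => ?; rewrite ?orbT.
- case/andP => H _; rewrite !mem_cat => xin yin.
  move: uxs => /= /andP [_ uxs]; apply: (sat_clique_pairs es uxs H) => //.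
  + case/orP: xin => [/fv_clique|] //; rewrite mem_filter Hfv /= in_cons => /andP[/negbTE -> //].
  + case/orP: yin => [/fv_clique|] //; rewrite mem_filter Hfv /= in_cons => /andP[/negbTE -> //].
Qed.


Definition ch (c : color) : seq color :=
  match c with GenTree.Node _ s => s | _ => [::] end.
Definition cmpc i c := nth col_one (ch c) i.

Definition vcol (T : finType) (e : rel T) l u :=
  match l with 0 => col_one | l'.+1 => col_mset [seq eb e l' u x | x <- enum (nbhd e u)] end.

Section Cross.
Variables (T T' : finType) (e : rel T) (e' : rel T').

Lemma eb_down l u v u' v' : eb e l.+1 u v = eb e' l.+1 u' v' -> eb e l u v = eb e' l u' v'.
Proof. exact: (congr1 (cmpc 0)). Qed.

Lemma eb_vcol l u v u' v' : eb e l u v = eb e' l u' v' ->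
  vcol e l u = vcol e' l u' /\ vcol e l v = vcol e' l v'.
Proof. case: l => [//|l] H; split; [exact: (congr1 (cmpc 1) H)|exact: (congr1 (cmpc 3) H)]. Qed.

Lemma vcol_down l u u' : vcol e l.+1 u = vcol e' l.+1 u' -> vcol e l u = vcol e' l u'.
Proof.
case: l => [//|l] /col_mset_eq P; apply/col_mset_eq.
have := perm_map (cmpc 0) P; rewrite -!map_comp.
by rewrite (@eq_map _ _ (cmpc 0 \o eb e l.+1 u) (eb e l u)) // (@eq_map _ _ (cmpc 0 \o eb e' l.+1 u') (eb e' l u')).
Qed.

Definition swapc (c : color) : color :=
  match c with GenTree.Node 1 [:: a; b] => col_pair b a | _ => c end.

Lemma eb_flip l u v u' v' : eb e l u v = eb e' l u' v' -> eb e l v u = eb e' l v' u'.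
Proof.
elim: l u v u' v' => [//|l IH] u v u' v' H.
have H0 := congr1 (cmpc 0) H; have H1 := congr1 (cmpc 1) H;
have H2 := congr1 (cmpc 2) H; have H3 := congr1 (cmpc 3) H; rewrite /cmpc /= in H0 H1 H2 H3.
rewrite /= (IH _ _ _ _ H0) H1 H3; congr col_tuple.
rewrite setIC [nbhd e' v' :&: _]setIC.
move/col_mset_eq: H2 => /(perm_map swapc); rewrite -!map_comp.
rewrite (@eq_map _ _ (swapc \o _) (fun y => col_pair (eb e l v y) (eb e l u y))) //
   (@eq_map _ _ (swapc \o _) (fun y => col_pair (eb e' l v' y) (eb e' l u' y))) //.
by move=> P; apply/col_mset_eq.
Qed.

End Cross.


Section Inv.
Variables (T1 T2 : finType) (e1 : rel T1) (e2 : rel T2).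
Hypothesis es1 : symmetric e1.
Hypothesis es2 : symmetric e2.

Definition mt l (a : nat -> option T1) (b : nat -> option T2) (X : seq nat) : Prop :=
 (forall x, x \in X -> exists u v, [/\ a x = Some u, b x = Some v & vcol e1 l u = vcol e2 l v]) /\
 (forall x y u v u' v', x \in X -> y \in X -> x != y -> a x = Some u -> a y = Some v ->
    b x = Some u' -> b y = Some v' ->
    e1 u v = e2 u' v' /\ (e1 u v -> eb e1 l u v = eb e2 l u' v')).

Lemma mt_sub l a b X Y : mt l a b X -> {subset Y <= X} -> mt l a b Y.
Proof.
move=> [H1 H2] S; split; first by move=> x /S; apply: H1.
by move=> x y u v u' v' /S xX /S yX; apply: H2.
Qed.

Lemma mt_down l a b X : mt l.+1 a b X -> mt l a b X.
Proof.
move=> [H1 H2]; split.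
  move=> x /H1 [u [v [Hu Hv Hc]]]; exists u, v; split => //; exact: vcol_down.
move=> x y u v u' v' xX yX nxy Hu Hv Hu' Hv'.
have [-> H] := H2 _ _ _ _ _ _ xX yX nxy Hu Hv Hu' Hv'; split => // E.
exact/eb_down/H.
Qed.

Lemma mt_le l l' a b X : l' <= l -> mt l a b X -> mt l' a b X.
Proof.
move/subnK => <-; elim: (l - l') => [//|n IH] H.
by apply: IH; apply: mt_down; rewrite addSn in H.
Qed.

Lemma sat_clique_eq l a b xs : uniq xs -> mt l a b (fv (clique xs)) ->
  sat e1 a (clique xs) = sat e2 b (clique xs).
Proof.
move=> uxs [H1 H2]; rewrite /clique !sat_bigAnd !all_map; apply: eq_in_all => p pin /=.
have n := ordpairs_neq uxs pin.
have m1 : p.1 \in fv (clique xs) by rewrite /clique fv_bigAnd has_map; apply/hasP; exists p; rewrite //= inE eqxx.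
have m2 : p.2 \in fv (clique xs).
  by rewrite /clique fv_bigAnd has_map; apply/hasP; exists p; rewrite //= !inE eqxx orbT.
have [u [u' [Hu Hu' _]]] := H1 _ m1.
have [v [v' [Hv Hv' _]]] := H1 _ m2.
rewrite Hu Hu' Hv Hv'.
by have [] := H2 _ _ _ _ _ _ m1 m2 n Hu Hv Hu' Hv'.
Qed.

Lemma mt_ext l a b xs y w w' : mt l a b xs -> y \notin xs -> vcol e1 l w = vcol e2 l w' ->
 (forall x u u', x \in xs -> a x = Some u -> b x = Some u' -> e1 u w = e2 u' w' /\
    (e1 u w -> eb e1 l u w = eb e2 l u' w' /\ eb e1 l w u = eb e2 l w' u')) ->
 mt l (upd a y w) (upd b y w') (y :: xs).
Proof.
move=> [H1 H2] yxs Hw H3; split.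
  move=> x; rewrite in_cons /upd; case: eqP => [_ _|_ /= xin]; first by exists w, w'.
  exact: H1.
move=> x z u v u' v'; rewrite !in_cons /upd.
case: (eqVneq x y) => [->|nxy]; case: (eqVneq z y) => [->|nzy] //=.
- move=> _ zin _ [<-] Hv [<-] Hv'.
  have [E F] := H3 _ _ _ zin Hv Hv'.
  have E' : e1 w v = e2 w' v' by rewrite es1 E es2.
  split => // G; have G' : e1 v w by rewrite es1.
  by case: (F G').
- move=> xin _ _ Hu [<-] Hu' [<-].
  have [E F] := H3 _ _ _ xin Hu Hu'; split => // G.
  by case: (F G).
- move=> xin zin; exact: H2.
Qed.


Lemma guard_upd (T : finType) (e : rel T) a phi y w x u : symmetric e -> CFOC phi ->
  sat e (upd a y w) phi -> a x = Some u -> x \in fv phi -> y \in fv phi -> x != y -> e u w.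
Proof.
move=> es C S Hu xin yin nxy.
have [u0 [w0 [H1 H2 H3]]] := CFOC_guard es C S xin yin nxy.
move: H1 H2 H3; rewrite /upd (negbTE nxy) eqxx Hu => -[<-] [<-] //.
Qed.

Lemma guard_upd2 (T : finType) (e : rel T) a phi y w x1 x2 u1 u2 : symmetric e -> CFOC phi ->
  sat e (upd a y w) phi -> a x1 = Some u1 -> a x2 = Some u2 -> x1 \in fv phi -> x2 \in fv phi ->
  x1 != x2 -> x1 != y -> x2 != y -> e u1 u2.
Proof.
move=> es C S Hu1 Hu2 x1in x2in n12 n1 n2.
have [u0 [w0 [H1 H2 H3]]] := CFOC_guard es C S x1in x2in n12.
move: H1 H2 H3; rewrite /upd (negbTE n1) (negbTE n2) Hu1 Hu2 => -[<-] [<-] //.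
Qed.

Hypothesis Hvc : forall l, perm_eq (map (vcol e1 l) (enum T1)) (map (vcol e2 l) (enum T2)).

Lemma cnt_card l phi xs y V a b :
  CFOC phi -> uniq (y :: xs) -> fv phi =i y :: xs -> size V <= 3 -> {subset vars phi <= V} ->
  (forall a b, mt l a b (fv phi) -> sat e1 a phi = sat e2 b phi) ->
  mt l.+1 a b xs ->
  #|[pred w | sat e1 (upd a y w) phi]| = #|[pred w | sat e2 (upd b y w) phi]|.
Proof.
move=> C uyx Hfv sV sub IH M.
have sz : size (y :: xs) <= 3.
  by apply: leq_trans (uniq_leq_size uyx _) sV => x; rewrite -Hfv => /fv_vars /sub.
have IH' : forall w w', mt l (upd a y w) (upd b y w') (y :: xs) ->
   sat e1 (upd a y w) phi = sat e2 (upd b y w') phi.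
  by move=> w w' H; apply: IH; apply: (mt_sub H) => x; rewrite Hfv.
have yfv : y \in fv phi by rewrite Hfv mem_head.
case: xs uyx Hfv sz M IH' => [|x1 [|x2 [|x3 xs]]] // uyx Hfv sz M IH'.
- rewrite !card_count; apply: (count_transfer (Hvc l)) => w w' _ _ E.
  apply: IH'; apply: mt_ext => //; by split.
- have x1in : x1 \in fv phi by rewrite Hfv !inE eqxx orbT.
  have ny : x1 != y by move: uyx; rewrite /= inE andbT eq_sym.
  have [u [u' [Hu Hu' Hc]]] := M.1 x1 (mem_head _ _).
  have -> : #|[pred w | sat e1 (upd a y w) phi]| = count (fun w => sat e1 (upd a y w) phi) (enum (nbhd e1 u)).
    rewrite count_enum_card; apply: eq_card => w /=; rewrite /nbhd inE.
    apply/idP/andP => [H|[]//]; split => //; rewrite inE; exact: (guard_upd es1 C H Hu x1in yfv ny).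
  have -> : #|[pred w | sat e2 (upd b y w) phi]| = count (fun w => sat e2 (upd b y w) phi) (enum (nbhd e2 u')).
    rewrite count_enum_card; apply: eq_card => w /=; rewrite /nbhd inE.
    apply/idP/andP => [H|[]//]; split => //; rewrite inE; exact: (guard_upd es2 C H Hu' x1in yfv ny).
  apply: (count_transfer (f1 := eb e1 l u) (f2 := eb e2 l u')); first by apply/col_mset_eq.
  move=> w w'; rewrite !mem_enum /nbhd !inE => Euw Euw' E; apply: IH'; apply: mt_ext.
  + exact: mt_down.
  + by rewrite inE eq_sym.
  + exact: (eb_vcol E).2.
  + move=> x u0 u0'; rewrite inE => /eqP -> ; rewrite Hu Hu' => -[<-] [<-] //.
    by rewrite Euw Euw'; split => // _; split => //; exact: eb_flip.
- have x1in : x1 \in fv phi by rewrite Hfv !inE eqxx orbT.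
  have x2in : x2 \in fv phi by rewrite Hfv !inE eqxx !orbT.
  move: uyx; rewrite /= !inE !negb_or andbT => /andP[/andP[ny1 ny2] n12].
  rewrite eq_sym in ny1; rewrite eq_sym in ny2.
  have [u1 [u1' [Hu1 Hu1' _]]] := M.1 x1 (mem_head _ _).
  have x2m : x2 \in [:: x1; x2] by rewrite !inE eqxx orbT.
  have [u2 [u2' [Hu2 Hu2' _]]] := M.1 x2 x2m.
  have [E12 Eb] := M.2 _ _ _ _ _ _ (mem_head _ _) x2m n12 Hu1 Hu2 Hu1' Hu2'.
  case: (boolP (e1 u1 u2)) => Huu.
  + have Ec := congr1 (cmpc 2) (Eb Huu); rewrite /cmpc /= in Ec.
    have -> : #|[pred w | sat e1 (upd a y w) phi]| =
      count (fun w => sat e1 (upd a y w) phi) (enum (nbhd e1 u1 :&: nbhd e1 u2)).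
      rewrite count_enum_card; apply: eq_card => w /=; rewrite /nbhd !inE.
      apply/idP/andP => [H|[]//]; split => //.
      by rewrite ?inE (guard_upd es1 C H Hu1 x1in yfv ny1) // (guard_upd es1 C H Hu2 x2in yfv ny2).
    have -> : #|[pred w | sat e2 (upd b y w) phi]| =
      count (fun w => sat e2 (upd b y w) phi) (enum (nbhd e2 u1' :&: nbhd e2 u2')).
      rewrite count_enum_card; apply: eq_card => w /=; rewrite /nbhd !inE.
      apply/idP/andP => [H|[]//]; split => //.
      by rewrite ?inE (guard_upd es2 C H Hu1' x1in yfv ny1) // (guard_upd es2 C H Hu2' x2in yfv ny2).
    apply: (count_transfer (f1 := fun w => col_pair (eb e1 l u1 w) (eb e1 l u2 w))
                           (f2 := fun w => col_pair (eb e2 l u1' w) (eb e2 l u2' w))).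
      by apply/col_mset_eq.
    move=> w w'; rewrite !mem_enum /nbhd !inE => /andP[E1 E2] /andP[E1' E2'] E.
    have F1 := congr1 (cmpc 0) E; have F2 := congr1 (cmpc 1) E; rewrite /cmpc /= in F1 F2.
    apply: IH'; apply: mt_ext.
    * exact: mt_down.
    * by rewrite !inE negb_or !(eq_sym y) ny1 ny2.
    * exact: (eb_vcol F1).2.
    * move=> x u0 u0'; rewrite !inE => /orP[/eqP ->|/eqP ->].
        rewrite Hu1 Hu1' => -[<-] [<-] //.
        by rewrite E1 E1'; split => // _; split => //; exact: eb_flip.
      rewrite Hu2 Hu2' => -[<-] [<-] //.
      by rewrite E2 E2'; split => // _; split => //; exact: eb_flip.
  + have Huu' : ~~ e2 u1' u2' by rewrite -E12.
    rewrite !eq_card0 // => w; rewrite !inE; apply/negP => H.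
      by move/negP: Huu'; apply; exact: (guard_upd2 es2 C H Hu1' Hu2' x1in x2in n12 ny1 ny2).
    by move/negP: Huu; apply; exact: (guard_upd2 es1 C H Hu1 Hu2 x1in x2in n12 ny1 ny2).
Qed.

Theorem eb_inv f : CFOC f -> forall V, size V <= 3 -> {subset vars f <= V} ->
  forall l, qd f <= l -> forall a b, mt l a b (fv f) -> sat e1 a f = sat e2 b f.
Proof.
elim => [xs uxs|phi xs C IH uxs Hfv|phi psi zs C1 IH1 C2 IH2 uzs Hfv|phi psi zs C1 IH1 C2 IH2 uzs Hfv
  |phi xs y k C IH uyx Hfv k1] V sV sub l Hl a b M /=.
- exact: (sat_clique_eq uxs M).
- rewrite (sat_clique_eq uxs (mt_sub M _)); last by move=> x; rewrite /= mem_cat => ->.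
  rewrite /= qd_clique max0n in Hl.
  rewrite (IH V sV _ l Hl a b) //; first by move=> x H; apply: sub; rewrite /= mem_cat H orbT.
  by apply: (mt_sub M) => x; rewrite /= mem_cat => ->; rewrite orbT.
- rewrite (sat_clique_eq uzs (mt_sub M _)); last by move=> x; rewrite /= mem_cat => ->.
  rewrite /= qd_clique max0n geq_max in Hl; case/andP: Hl => Hl1 Hl2.
  rewrite (IH1 V sV _ l Hl1 a b); last first.
  + by apply: (mt_sub M) => x; rewrite /= !mem_cat => ->; rewrite orbT.
  + by move=> x H; apply: sub; rewrite /= !mem_cat H orbT.
  rewrite (IH2 V sV _ l Hl2 a b) //; last first.
  + by apply: (mt_sub M) => x; rewrite /= !mem_cat => ->; rewrite !orbT.
  + by move=> x H; apply: sub; rewrite /= !mem_cat H !orbT.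
- rewrite (sat_clique_eq uzs (mt_sub M _)); last by move=> x; rewrite /= mem_cat => ->.
  rewrite /= qd_clique max0n geq_max in Hl; case/andP: Hl => Hl1 Hl2.
  rewrite (IH1 V sV _ l Hl1 a b); last first.
  + by apply: (mt_sub M) => x; rewrite /= !mem_cat => ->; rewrite orbT.
  + by move=> x H; apply: sub; rewrite /= !mem_cat H orbT.
  rewrite (IH2 V sV _ l Hl2 a b) //; last first.
  + by apply: (mt_sub M) => x; rewrite /= !mem_cat => ->; rewrite !orbT.
  + by move=> x H; apply: sub; rewrite /= !mem_cat H !orbT.
- move: uyx => /[dup] uyx /= /andP[yxs uxs].
  rewrite (sat_clique_eq uxs (mt_sub M _)); last by move=> x; rewrite /= mem_cat => ->.
  rewrite /= qd_clique max0n in Hl.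
  case: l Hl M => [//|l] Hl M.
  have subphi : {subset vars phi <= V} by move=> x H; apply: sub; rewrite /= mem_cat in_cons H !orbT.
  rewrite (@cnt_card l phi xs y V a b C uyx Hfv sV subphi) //.
    by move=> a' b'; apply: (IH V sV subphi l Hl).
  apply: (mt_sub M) => x xin; rewrite /= mem_cat; apply/orP; right.
  rewrite mem_filter Hfv in_cons xin orbT andbT /=; apply/eqP => E; by rewrite -E xin in yxs.
Qed.

End Inv.


Lemma count_oedges (T : finType) (e : rel T) (P : T -> T -> bool) :
  count (fun p => P p.1 p.2) (enum (oedges e)) = \sum_u #|[pred w | e u w && P u w]|.
Proof.
rewrite count_enum_card -sum1_card.
transitivity (\sum_(u | true) \sum_(w | e u w && P u w) 1).
  rewrite pair_big_dep; apply: eq_bigl => p; by rewrite /oedges !inE.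
by apply: eq_bigr => u _; rewrite sum1_card.
Qed.

Lemma sum_indic (T : finType) (P : pred T) : \sum_u (P u : nat) = count P (enum T).
Proof. by rewrite -big_mkcond /= sum1_card card_count. Qed.

Definition dd c := size (ch c).

Lemma vcol_count (T : finType) (e : rel T) l c :
  count_mem c (map (vcol e l.+1) (enum T)) * dd c =
  count (fun col => cmpc 1 col == c) (ebG e l.+1).
Proof.
rewrite /ebG count_map.
have -> : count (preim (fun p => eb e l.+1 p.1 p.2) (fun col => cmpc 1 col == c)) (enum (oedges e))
   = \sum_u #|[pred w | e u w && (vcol e l.+1 u == c)]|.
  exact: (count_oedges e (fun u w => vcol e l.+1 u == c)).
rewrite (eq_bigr (fun u => (vcol e l.+1 u == c) * dd c)); last first.
  move=> u _; case: eqP => [<-|_].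
    rewrite mul1n /dd /= size_sort size_map -cardE; apply: eq_card => w.
    by rewrite /nbhd !inE andbT.
  by rewrite mul0n; apply: eq_card0 => w; rewrite !inE andbF.
by rewrite -big_distrl /= sum_indic count_map.
Qed.

Lemma dd_pos (T : finType) (e : rel T) l c : (forall v, exists w, e v w) ->
  c \in map (vcol e l.+1) (enum T) -> 0 < dd c.
Proof.
move=> ni /mapP [u _ ->]; rewrite /dd /= size_sort size_map -cardE.
have [w Hw] := ni u; apply/card_gt0P; exists w; by rewrite /nbhd inE.
Qed.

Lemma map_constc (A : Type) (s : seq A) (c : color) : map (fun _ => c) s = nseq (size s) c.
Proof. by elim: s => //= x s ->. Qed.

Lemma vcol_perm (T1 T2 : finType) (e1 : rel T1) (e2 : rel T2) :
  #|T1| = #|T2| -> (forall l, perm_eq (ebG e1 l) (ebG e2 l)) ->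
  (forall v, exists w, e1 v w) -> (forall v, exists w, e2 v w) ->
  forall l, perm_eq (map (vcol e1 l) (enum T1)) (map (vcol e2 l) (enum T2)).
Proof.
move=> Hsz Heb n1 n2 [|l].
  rewrite /= (map_constc _ col_one) (map_constc _ col_one) -!cardE Hsz; exact: perm_refl.
rewrite /perm_eq; apply/allP => c _ /=; apply/eqP.
have E : count_mem c (map (vcol e1 l.+1) (enum T1)) * dd c =
         count_mem c (map (vcol e2 l.+1) (enum T2)) * dd c.
  by rewrite !vcol_count; apply/permP/Heb.
case: (posnP (dd c)) => [d0|dpos]; last by apply/eqP; rewrite -(eqn_pmul2r dpos) E.
have h1 : c \notin map (vcol e1 l.+1) (enum T1) by apply/negP => /(dd_pos n1); rewrite d0.
have h2 : c \notin map (vcol e2 l.+1) (enum T2) by apply/negP => /(dd_pos n2); rewrite d0.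
by move/count_memPn: h1 => ->; move/count_memPn: h2 => ->.
Qed.


Theorem dir_back (T1 T2 : finType) (e1 : rel T1) (e2 : rel T2) :
  simple_graph_noiso e1 -> simple_graph_noiso e2 ->
  CFOC3_distinguishable e1 e2 -> EB_distinguishable e1 e2.
Proof.
move=> [s1 [_ n1]] [s2 [_ n2]] [phi [[C nv] [sen [m1 m2]]]].
apply: NNPP => nEB.
have Hsz : #|T1| = #|T2| by apply: NNPP => H; apply: nEB; left.
have Heb : forall l, perm_eq (ebG e1 l) (ebG e2 l).
  by move=> l; apply/negPn/negP => H; apply: nEB; right; exists l.
have Hvc := vcol_perm Hsz Heb n1 n2.
have := @eb_inv _ _ e1 e2 s1 s2 Hvc phi C (undup (vars phi)) nv _ (qd phi) (leqnn _)
   (fun _ => None) (fun _ => None).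
rewrite /models in m1 m2; rewrite sen => H.
have M : mt e1 e2 (qd phi) (fun _ => None) (fun _ => None) [::] by split.
by rewrite -H ?m1 // in m2 => x; rewrite mem_undup.
Qed.


Definition cneg xs phi := FAnd (clique xs) (FNot phi).
Definition cand zs phi psi := FAnd (clique zs) (FAnd phi psi).
Definition ccnt xs k y phi := FAnd (clique xs) (FCnt k y phi).
Definition fls xs := cneg xs (clique xs).
Definition exact xs m y phi :=
  if m is m'.+1 then cand xs (ccnt xs m y phi) (cneg xs (ccnt xs m.+1 y phi))
  else cneg xs (ccnt xs 1 y phi).
Definition conjs xs fs := foldr (cand xs) (clique xs) fs.
Definition third (x y : nat) := 3 - (x + y).
Definition V3 : seq nat := [:: 0; 1; 2].

Definition good (xs : seq nat) f := [/\ CFOC f, fv f =i xs & {subset vars f <= V3}].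

Lemma good_perm X Y f : good X f -> X =i Y -> good Y f.
Proof. by case=> C H S E; split => // x; rewrite H E. Qed.

Lemma good_clique2 x y : x != y -> x \in V3 -> y \in V3 -> good [:: x; y] (clique [:: x; y]).
Proof.
move=> nxy xV yV; split.
- by apply: CFOC_clique; rewrite /= inE nxy.
- by [].
- by move=> z /= /predU1P [->|/predU1P[->|]].
Qed.

Lemma or_fv_clique (x : nat) (xs : seq nat) : (x \in fv (clique xs)) || (x \in xs) = (x \in xs).
Proof.
case: (boolP (x \in xs)) => [xin|nx]; first by rewrite orbT.
rewrite orbF; apply/negbTE/negP => /fv_clique; by rewrite (negbTE nx).
Qed.

Lemma good_cneg xs phi : uniq xs -> {subset xs <= V3} -> good xs phi -> good xs (cneg xs phi).
Proof.
move=> uxs sxs [C H S]; split.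
- by apply: CFOC_neg.
- by move=> x /=; rewrite mem_cat H or_fv_clique.
- move=> x /=; rewrite mem_cat => /orP[/vars_clique /sxs|/S] //.
Qed.

Lemma good_cand zs X Y phi psi : uniq zs -> {subset zs <= V3} -> good X phi -> good Y psi ->
  zs =i X ++ Y -> good zs (cand zs phi psi).
Proof.
move=> uzs szs [C1 H1 S1] [C2 H2 S2] E.
have E' : zs =i fv phi ++ fv psi by move=> x; rewrite E !mem_cat H1 H2.
split.
- exact: CFOC_and.
- by move=> x /=; rewrite mem_cat -E' or_fv_clique.
- move=> x /=; rewrite !mem_cat => /orP[/vars_clique /szs|/orP[/S1|/S2]] //.
Qed.

Lemma good_ccnt xs k y phi : uniq (y :: xs) -> {subset xs <= V3} -> good (y :: xs) phi -> 0 < k ->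
  good xs (ccnt xs k y phi).
Proof.
move=> uyx sxs [C H S] k1.
have yxs : y \notin xs by case/andP: uyx.
split.
- exact: CFOC_cnt.
- move=> x /=; rewrite mem_cat mem_filter H in_cons /=.
  apply/orP/idP => [[/fv_clique|/andP[/negbTE -> //]]|xin] //.
  right; rewrite xin orbT andbT; apply/eqP => E; by rewrite -E xin in yxs.
- move=> x /=; rewrite mem_cat in_cons => /orP[/vars_clique /sxs|/orP[/eqP ->|/S]] //.
  by apply: S; apply: fv_vars; rewrite H mem_head.
Qed.

Lemma good_exact xs m y phi : uniq (y :: xs) -> {subset xs <= V3} -> good (y :: xs) phi ->
  good xs (exact xs m y phi).
Proof.
move=> uyx sxs G; have uxs : uniq xs by case/andP: uyx.
case: m => [|m] /=; first by apply: good_cneg => //; exact: good_ccnt.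
apply: (good_cand (X := xs) (Y := xs)) => //.
- exact: good_ccnt.
- by apply: good_cneg => //; exact: good_ccnt.
- by move=> x; rewrite mem_cat orbb.
Qed.

Fixpoint InF (f : fo) (s : seq fo) : Prop :=
  match s with [::] => False | g :: s' => g = f \/ InF f s' end.

Lemma good_conjs xs fs : uniq xs -> {subset xs <= V3} -> good xs (clique xs) ->
  (forall f, InF f fs -> exists X, good X f /\ {subset X <= xs}) -> good xs (conjs xs fs).
Proof.
move=> uxs sxs Gc; elim: fs => [|f fs IH] H //=.
have [X [GX SX]] := H f (or_introl erefl).
apply: (good_cand (X := X) (Y := xs)) => //.
- by apply: IH => g Hg; apply: H; right.
- move=> x; rewrite mem_cat; case: (boolP (x \in xs)) => [_|nx]; first by rewrite orbT.
  by rewrite orbF; apply/esym/negbTE/negP => /SX; rewrite (negbTE nx).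
Qed.

Lemma third_ok x y : x != y -> x \in V3 -> y \in V3 ->
  [/\ third x y \in V3, third x y != x & third x y != y].
Proof.
move=> nxy xV yV.
have x3 : x < 3 by move: xV; rewrite !inE => /or3P [] /eqP ->.
have y3 : y < 3 by move: yV; rewrite !inE => /or3P [] /eqP ->.
by case: x nxy x3 {xV} => [|[|[|x]]]; case: y y3 {yV} => [|[|[|y]]].
Qed.

Section Sem.
Variables (T : finType) (e : rel T).

Lemma sat_exact a xs m y phi : sat e a (exact xs m y phi) =
  sat e a (clique xs) && (#|[pred w | sat e (upd a y w) phi]| == m).
Proof.
case: m => [|m] /=; case: (sat e a (clique xs)) => //=.
  by rewrite lt0n negbK.
by rewrite -ltnNge eqn_leq andbC.
Qed.

Lemma sat_conjs a xs fs : sat e a (conjs xs fs) = sat e a (clique xs) && all (sat e a) fs.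
Proof.
elim: fs => [|f fs IH] /=; first by rewrite andbT.
by rewrite IH; case: (sat e a (clique xs)); rewrite ?andbF.
Qed.

Lemma sat_clique2 a x y u v : a x = Some u -> a y = Some v ->
  sat e a (clique [:: x; y]) = e u v.
Proof. by move=> Hx Hy; rewrite /clique /= Hx Hy. Qed.

Lemma sat_clique1 a x : sat e a (clique [:: x]) = true.
Proof. by []. Qed.

Lemma sat_clique3 a x y z u v w : a x = Some u -> a y = Some v -> a z = Some w ->
  sat e a (clique [:: x; y; z]) = [&& e u v, e u w & e v w].
Proof. by move=> Hx Hy Hz; rewrite /clique /= Hx Hy Hz. Qed.

End Sem.


Fixpoint FF (D : nat -> seq color) (l : nat) (c : color) (x y : nat) : fo :=
  match l with
  | 0 => if c == col_one then clique [:: x; y] else fls [:: x; y]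
  | l'.+1 => let z := third x y in
     conjs [:: x; y] (FF D l' (cmpc 0 c) x y ::
       [seq exact [:: x] (count_mem d (ch (cmpc 1 c))) z (FF D l' d x z) | d <- D l'] ++
       [seq exact [:: x; y] (count_mem (col_pair d1 d2) (ch (cmpc 2 c))) z
            (cand [:: x; y; z] (FF D l' d1 x z) (FF D l' d2 y z)) | d1 <- D l', d2 <- D l'] ++
       [seq exact [:: y] (count_mem d (ch (cmpc 3 c))) z (FF D l' d y z) | d <- D l'])
  end.

Lemma FF_S D l c x y : FF D l.+1 c x y =
     conjs [:: x; y] (FF D l (cmpc 0 c) x y ::
       [seq exact [:: x] (count_mem d (ch (cmpc 1 c))) (third x y) (FF D l d x (third x y)) | d <- D l] ++
       [seq exact [:: x; y] (count_mem (col_pair d1 d2) (ch (cmpc 2 c))) (third x y)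
            (cand [:: x; y; third x y] (FF D l d1 x (third x y)) (FF D l d2 y (third x y))) | d1 <- D l, d2 <- D l] ++
       [seq exact [:: y] (count_mem d (ch (cmpc 3 c))) (third x y) (FF D l d y (third x y)) | d <- D l]).
Proof. by []. Qed.

Fixpoint AllP (P : fo -> Prop) (s : seq fo) : Prop :=
  match s with [::] => True | f :: s' => P f /\ AllP P s' end.

Lemma AllP_cat P s t : AllP P s -> AllP P t -> AllP P (s ++ t).
Proof. by elim: s => //= f s IH [H1 H2] H; split => //; apply: IH. Qed.


Lemma AllP_mapT (A : Type) P (g : A -> fo) (s : seq A) : (forall x, P (g x)) -> AllP P (map g s).
Proof. by move=> H; elim: s => //= x s IH; split. Qed.

Lemma AllP_flatten (A : Type) P (F : A -> seq fo) (s : seq A) :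
  (forall x, AllP P (F x)) -> AllP P (flatten (map F s)).
Proof. by move=> H; elim: s => //= x s IH; apply: AllP_cat. Qed.

Lemma AllP_InF P s : AllP P s -> forall f, InF f s -> P f.
Proof. by elim: s => //= g s IH [H1 H2] f [<-|/IH]; [|apply]. Qed.

Lemma sub3 x y : x \in V3 -> y \in V3 -> {subset [:: x; y] <= V3}.
Proof. by move=> xV yV z /predU1P [->|/predU1P [->|]]. Qed.

Lemma good_FF D l : forall c x y, x != y -> x \in V3 -> y \in V3 -> good [:: x; y] (FF D l c x y).
Proof.
elim: l => [|l IH] c x y nxy xV yV.
  rewrite /=; case: (c == col_one); first exact: good_clique2.
  apply: good_cneg; [by rewrite /= inE nxy|exact: sub3|exact: good_clique2].
have [zV nzx nzy] := third_ok nxy xV yV.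
rewrite FF_S; apply: good_conjs; [by rewrite /= inE nxy|exact: sub3|exact: good_clique2|].
apply: AllP_InF => /=; split.
  by exists [:: x; y]; split => //; exact: IH.
apply: AllP_cat; [|apply: AllP_cat].
- apply: AllP_mapT => d; exists [:: x]; split; last by move=> w; rewrite !inE => ->.
  apply: good_exact; [by rewrite /= inE nzx|by move=> w; rewrite inE => /eqP->|].
  apply: (good_perm (IH _ _ _ _ xV zV)); first by rewrite eq_sym.
  by move=> w; rewrite !inE orbC.
- apply: AllP_flatten => d1; apply: AllP_mapT => d2.
  exists [:: x; y]; split => //.
  apply: good_exact; [by rewrite /= !inE negb_or nzx nzy nxy|exact: sub3|].
  apply: (@good_perm [:: x; y; third x y]); last first.
    by move=> w; rewrite !inE; case: (w == x); case: (w == y); case: (w == third x y).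
  apply: (good_cand (X := [:: x; third x y]) (Y := [:: y; third x y])).
  + by rewrite /= !inE negb_or nxy !(eq_sym _ (third x y)) nzx nzy.
  + by move=> w /predU1P [->|/predU1P [->|/predU1P [->|]]].
  + by apply: IH => //; rewrite eq_sym.
  + by apply: IH => //; rewrite eq_sym.
  + by move=> w; rewrite !inE; case: (w == x); case: (w == y); case: (w == third x y).
- apply: AllP_mapT => d; exists [:: y]; split; last by move=> w; rewrite !inE => ->; rewrite orbT.
  apply: good_exact; [by rewrite /= inE nzy|by move=> w; rewrite inE => /eqP->|].
  apply: (good_perm (IH _ _ _ _ yV zV)); first by rewrite eq_sym.
  by move=> w; rewrite !inE orbC.
Qed.

Lemma tuple_eq a b c d a' b' c' d' :
  (col_tuple a b c d == col_tuple a' b' c' d') = [&& a == a', b == b', c == c' & d == d'].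
Proof.
rewrite /col_tuple; apply/eqP/idP => [[-> -> -> ->]|/and4P[/eqP-> /eqP-> /eqP-> /eqP->]] //; by rewrite !eqxx.
Qed.

Lemma pair_eq a b a' b' : (col_pair a b == col_pair a' b') = (a == a') && (b == b').
Proof. rewrite /col_pair; apply/eqP/idP => [[-> ->]|/andP[/eqP-> /eqP->]] //; by rewrite !eqxx. Qed.

Lemma card_nbhd (T : finType) (e : rel T) u (f : T -> color) d :
  #|[pred w | e u w && (f w == d)]| = count_mem d (map f (enum (nbhd e u))).
Proof. by rewrite count_map count_enum_card; apply: eq_card => w; rewrite /nbhd !inE. Qed.

Lemma card_nbhd2 (T : finType) (e : rel T) u v (f g : T -> color) d1 d2 :
  #|[pred w | (e u w && e v w) && (col_pair (f w) (g w) == col_pair d1 d2)]| =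
  count_mem (col_pair d1 d2) [seq col_pair (f w) (g w) | w <- enum (nbhd e u :&: nbhd e v)].
Proof. by rewrite count_map count_enum_card; apply: eq_card => w; rewrite /= /nbhd !inE. Qed.

Lemma perm_eq_onD (D s1 s2 : seq color) : {subset s1 <= D} -> {subset s2 <= D} ->
  all (fun d => count_mem d s1 == count_mem d s2) D = perm_eq s1 s2.
Proof.
move=> S1 S2; apply/allP/idP => [H|/permP H d _]; last by rewrite H.
rewrite /perm_eq; apply/allP => d; rewrite mem_cat => /orP[/S1|/S2] dD; exact: H.
Qed.

Lemma FF0 D c x y : FF D 0 c x y = if c == col_one then clique [:: x; y] else fls [:: x; y].
Proof. by []. Qed.

Lemma sat_cneg (T : finType) (e : rel T) a xs phi :
  sat e a (cneg xs phi) = sat e a (clique xs) && ~~ sat e a phi.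
Proof. by []. Qed.

Lemma sat_cand (T : finType) (e : rel T) a zs p q :
  sat e a (cand zs p q) = sat e a (clique zs) && (sat e a p && sat e a q).
Proof. by []. Qed.

Lemma card_ext (T : finType) (P Q : pred T) : (forall w, P w = Q w) ->
  #|[pred w | P w]| = #|[pred w | Q w]|.
Proof. by move=> H; apply: eq_card => w; rewrite !inE H. Qed.

Section FFok.
Variable D : nat -> seq color.
Hypothesis Hreal : forall l c, c \in D l.+1 -> exists (T' : finType) (e' : rel T'),
  (forall u v, eb e' l u v \in D l) /\ exists u0 v0, c = eb e' l.+1 u0 v0.

Lemma FF_ok (T : finType) (e : rel T) (cov : forall l u v, eb e l u v \in D l) l :
  forall c, c \in D l -> forall x y a u v, x != y -> x \in V3 -> y \in V3 ->
  a x = Some u -> a y = Some v -> sat e a (FF D l c x y) = e u v && (eb e l u v == c).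
Proof.
elim: l => [|l IH] c cD x y a u v nxy xV yV Hx Hy.
  rewrite FF0; case: eqP => [->|nc]; first by rewrite (sat_clique2 e Hx Hy) eqxx andbT.
  rewrite /fls sat_cneg (sat_clique2 e Hx Hy) andbN.
  by case: (e u v) => //=; apply/esym/eqP => E; apply: nc; rewrite -E.
have [T' [e' [cov' [u0 [v0 ->]]]]] := Hreal cD.
have [zV nzx nzy] := third_ok nxy xV yV.
have nxz : x != third x y by rewrite eq_sym.
have nyz : y != third x y by rewrite eq_sym.
have Hux w : upd a (third x y) w x = Some u by rewrite /upd (negbTE nxz).
have Huy w : upd a (third x y) w y = Some v by rewrite /upd (negbTE nyz).
have Huz w : upd a (third x y) w (third x y) = Some w by rewrite /upd eqxx.
rewrite FF_S sat_conjs (sat_clique2 e Hx Hy) /= !all_cat.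
case: (boolP (e u v)) => Euv //=.
set z := third x y in Hux Huy Huz nxz nyz zV *.
have -> : cmpc 0 (col_tuple (eb e' l u0 v0)
                 (col_mset [seq eb e' l u0 x0 | x0 <- enum (nbhd e' u0)])
                 (col_mset [seq col_pair (eb e' l u0 y0) (eb e' l v0 y0)
                       | y0 <- enum (nbhd e' u0 :&: nbhd e' v0)])
                 (col_mset [seq eb e' l v0 z0 | z0 <- enum (nbhd e' v0)])) = eb e' l u0 v0 by [].
rewrite tuple_eq.
rewrite (IH (eb e' l u0 v0) (cov' _ _) x y a u v) // Euv /=.
congr [&& _, _, _ & _].
- rewrite all_map (@eq_in_all _ _ (fun d => count_mem d [seq eb e l u w | w <- enum (nbhd e u)] ==
     count_mem d [seq eb e' l u0 w | w <- enum (nbhd e' u0)])); last first.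
    move=> d dD /=; rewrite sat_exact sat_clique1 /= count_sort; congr (_ == _).
    rewrite -(card_nbhd e u (eb e l u) d).
    by apply: eq_card => w; rewrite !inE (IH d dD x z (upd a z w) u w nxz xV zV (Hux w) (Huz w)).
  rewrite perm_eq_onD; first by apply/idP/eqP => H; apply/col_mset_eq.
    by move=> cc /mapP [w _ ->]; exact: cov.
  by move=> cc /mapP [w _ ->]; exact: cov'.
- have Hc : forall d1 d2, d1 \in D l -> d2 \in D l ->
    sat e a (exact [:: x; y] (count_mem (col_pair d1 d2) (sort col_le
       [seq col_pair (eb e' l u0 w) (eb e' l v0 w) | w <- enum (nbhd e' u0 :&: nbhd e' v0)])) z
       (cand [:: x; y; z] (FF D l d1 x z) (FF D l d2 y z))) =
    (count_mem (col_pair d1 d2) [seq col_pair (eb e l u w) (eb e l v w) | w <- enum (nbhd e u :&: nbhd e v)]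
     == count_mem (col_pair d1 d2) [seq col_pair (eb e' l u0 w) (eb e' l v0 w) | w <- enum (nbhd e' u0 :&: nbhd e' v0)]).
    move=> d1 d2 d1D d2D.
    rewrite sat_exact (sat_clique2 e Hx Hy) Euv andTb count_sort; congr (_ == _).
    rewrite -(card_nbhd2 e u v (eb e l u) (eb e l v) d1 d2).
    apply: card_ext => w; cbv beta; rewrite sat_cand (sat_clique3 e (Hux w) (Huy w) (Huz w)).
    rewrite (IH d1 d1D x z (upd a z w) u w nxz xV zV (Hux w) (Huz w)).
    rewrite (IH d2 d2D y z (upd a z w) v w nyz yV zV (Huy w) (Huz w)) pair_eq Euv.
    by case: (e u w); case: (e v w).
  transitivity (perm_eq [seq col_pair (eb e l u w) (eb e l v w) | w <- enum (nbhd e u :&: nbhd e v)]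
      [seq col_pair (eb e' l u0 w) (eb e' l v0 w) | w <- enum (nbhd e' u0 :&: nbhd e' v0)]); last first.
    by apply/idP/eqP => H; apply/col_mset_eq.
  apply/all_allpairsP/idP => [H|H].
    rewrite /perm_eq; apply/allP => cc; rewrite mem_cat => /orP [] /mapP [w _ ->] /=.
      by rewrite -Hc ?cov //; apply: H; rewrite ?cov.
    by rewrite -Hc ?cov' //; apply: H; rewrite ?cov'.
  by move=> d1 d2 d1D d2D; rewrite Hc //; apply/eqP; exact: (permP H).
- rewrite all_map (@eq_in_all _ _ (fun d => count_mem d [seq eb e l v w | w <- enum (nbhd e v)] ==
     count_mem d [seq eb e' l v0 w | w <- enum (nbhd e' v0)])); last first.
    move=> d dD /=; rewrite sat_exact sat_clique1 /= count_sort; congr (_ == _).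
    rewrite -(card_nbhd e v (eb e l v) d).
    by apply: eq_card => w; rewrite !inE (IH d dD y z (upd a z w) v w nyz yV zV (Huy w) (Huz w)).
  rewrite perm_eq_onD; first by apply/idP/eqP => H; apply/col_mset_eq.
    by move=> cc /mapP [w _ ->]; exact: cov.
  by move=> cc /mapP [w _ ->]; exact: cov'.
Qed.
End FFok.


Lemma good_sentence f : good [::] f -> CFOC3 f /\ sentence f.
Proof.
case=> C H S; split; first split => //.
  rewrite /num_vars; apply: (@leq_trans (size V3)) => //.
  by apply: uniq_leq_size; [exact: undup_uniq|move=> x; rewrite mem_undup => /S].
rewrite /sentence; case: (fv f) H => // x s H; have := H x; by rewrite mem_head.
Qed.

Lemma sat_neg0 (T : finType) (e : rel T) a f : sat e a (cneg [::] f) = ~~ sat e a f.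
Proof. by []. Qed.

Lemma sat_cnt0 (T : finType) (e : rel T) a k y f :
  sat e a (ccnt [::] k y f) = (k <= #|[pred w | sat e (upd a y w) f]|).
Proof. by []. Qed.

Lemma sum_by_level (T : finType) (g : T -> nat) N : (forall u, g u < N) ->
  \sum_u g u = \sum_(m < N) m * #|[pred u | g u == m]|.
Proof.
move=> HN.
transitivity (\sum_u \sum_(m < N) (g u == m) * m).
  apply: eq_bigr => u _; rewrite (bigD1 (Ordinal (HN u))) //= eqxx mul1n big1 ?addn0 //.
  move=> m nm; case: eqP => [E|_]; last by rewrite mul0n.
  by exfalso; move/eqP: nm; apply; apply: val_inj; rewrite /= E.
rewrite exchange_big; apply: eq_bigr => m _.
rewrite [RHS]mulnC -sum_nat_const [RHS]big_mkcond /=; apply: eq_bigr => u _; rewrite inE.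
by case: (g u == m); rewrite ?mul1n ?mul0n.
Qed.

Section Fwd.
Variables (T1 T2 : finType) (e1 : rel T1) (e2 : rel T2).

Definition DD l : seq color :=
  [seq eb e1 l p.1 p.2 | p <- enum [pred p : T1 * T1 | true]] ++
  [seq eb e2 l p.1 p.2 | p <- enum [pred p : T2 * T2 | true]].

Lemma cov1 l u v : eb e1 l u v \in DD l.
Proof. by rewrite mem_cat; apply/orP; left; apply/mapP; exists (u, v); rewrite ?mem_enum. Qed.
Lemma cov2 l u v : eb e2 l u v \in DD l.
Proof. by rewrite mem_cat; apply/orP; right; apply/mapP; exists (u, v); rewrite ?mem_enum. Qed.

Lemma DDreal l c : c \in DD l.+1 -> exists (T' : finType) (e' : rel T'),
  (forall u v, eb e' l u v \in DD l) /\ exists u0 v0, c = eb e' l.+1 u0 v0.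
Proof.
rewrite mem_cat => /orP [] /mapP [p _ ->].
  by exists T1, e1; split; [exact: cov1|exists p.1, p.2].
by exists T2, e2; split; [exact: cov2|exists p.1, p.2].
Qed.

Definition gcount (T : finType) (e : rel T) l c u := #|[pred w | e u w && (eb e l u w == c)]|.

Lemma ebG_count (T : finType) (e : rel T) l c :
  count_mem c (ebG e l) = \sum_u gcount e l c u.
Proof.
rewrite /ebG count_map.
exact: (count_oedges e (fun u w => eb e l u w == c)).
Qed.

Definition psiF l c m := exact [:: 0] m 1 (FF DD l c 0 1).
Definition SF l c m K := ccnt [::] K 0 (psiF l c m).

Lemma good_SF l c m K : 0 < K -> good [::] (SF l c m K).
Proof.
move=> K0; apply: good_ccnt => //; apply: good_exact => //.
  by move=> x /predU1P [->|].
have G := @good_FF DD l c 0 1 erefl erefl erefl.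
apply: (good_perm G) => x; rewrite !inE; by case: (x == 0); case: (x == 1).
Qed.

Lemma models_SF (T : finType) (e : rel T) (cov : forall l u v, eb e l u v \in DD l) l c m K :
  c \in DD l -> models e (SF l c m K) = (K <= #|[pred u | gcount e l c u == m]|).
Proof.
move=> cD; rewrite /models /SF sat_cnt0; congr (_ <= _); apply: card_ext => u.
rewrite /psiF sat_exact sat_clique1 /=; congr (_ == _); apply: card_ext => w.
by rewrite (FF_ok DDreal cov cD (x:=0) (y:=1) (u:=u) (v:=w)).
Qed.

Definition S0 k := ccnt [::] k 0 (ccnt [:: 0] 1 1 (clique [:: 1; 0])).

Lemma good_S0 k : 0 < k -> good [::] (S0 k).
Proof.
move=> k0; apply: good_ccnt => //; apply: good_ccnt => //.
  by move=> x /predU1P [->|].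
exact: good_clique2.
Qed.

Lemma models_S0 (T : finType) (e : rel T) k : simple_graph_noiso e ->
  models e (S0 k) = (k <= #|T|).
Proof.
case=> es [_ ni]; rewrite /models /S0 sat_cnt0; congr (_ <= _).
rewrite cardT; apply: eq_cardT => u; rewrite !inE.
rewrite /ccnt /= -/(clique [:: 1; 0]).
have [w Hw] := ni u; apply/card_gt0P; exists w.
by rewrite inE es.
Qed.

Lemma models_neg (T : finType) (e : rel T) f : models e (cneg [::] f) = ~~ models e f.
Proof. by []. Qed.

Lemma good_neg0 f : good [::] f -> good [::] (cneg [::] f).
Proof. by move=> G; apply: good_cneg. Qed.

Theorem dir_fwd : simple_graph_noiso e1 -> simple_graph_noiso e2 ->
  EB_distinguishable e1 e2 -> CFOC3_distinguishable e1 e2.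
Proof.
move=> G1 G2 [Hsz|[l Hp]].
  case: (ltngtP #|T1| #|T2|) => H; last by [].
  - have k0 : 0 < #|T2| by apply: leq_ltn_trans H.
    have [C S] := good_sentence (good_neg0 (good_S0 k0)).
    exists (cneg [::] (S0 #|T2|)); split => //; split => //.
    by rewrite !models_neg !models_S0 // leqnn -ltnNge H.
  - have k0 : 0 < #|T1| by apply: leq_ltn_trans H.
    have [C S] := good_sentence (good_S0 k0).
    exists (S0 #|T1|); split => //; split => //.
    by rewrite !models_S0 // leqnn -ltnNge H.
move: Hp; rewrite /perm_eq => /allPn [c _ /=] Hc.
have cD : c \in DD l.
  case: (boolP (c \in ebG e1 l)) => [/mapP [p _ ->]|n1]; first exact: cov1.
  case: (boolP (c \in ebG e2 l)) => [/mapP [p _ ->]|n2]; first exact: cov2.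
  by move/count_memPn: n1 Hc => ->; move/count_memPn: n2 => ->.
rewrite !ebG_count in Hc.
pose N := (maxn #|T1| #|T2|).+1.
have B1 : forall u, gcount e1 l c u < N.
  by move=> u; rewrite ltnS; apply: leq_trans (max_card _) (leq_maxl _ _).
have B2 : forall u, gcount e2 l c u < N.
  by move=> u; rewrite ltnS; apply: leq_trans (max_card _) (leq_maxr _ _).
have [m Hm] : exists m, #|[pred u | gcount e1 l c u == m]| != #|[pred u | gcount e2 l c u == m]|.
  apply: NNPP => H; move/negP: Hc; apply.
  rewrite (sum_by_level B1) (sum_by_level B2); apply/eqP; apply: eq_bigr => m _.
  congr (_ * _); apply/eqP; apply/negPn/negP => H'; apply: H; by exists (val m).
case: (ltngtP #|[pred u | gcount e1 l c u == m]| #|[pred u | gcount e2 l c u == m]|) => H; last first.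
- by rewrite H eqxx in Hm.
- have k0 : 0 < #|[pred u | gcount e1 l c u == m]| by apply: leq_ltn_trans H.
  have [C S] := good_sentence (good_SF l c m k0).
  exists (SF l c m #|[pred u | gcount e1 l c u == m]|); split => //; split => //.
  by rewrite (models_SF cov1) // (models_SF cov2) // leqnn -ltnNge H.
- have k0 : 0 < #|[pred u | gcount e2 l c u == m]| by apply: leq_ltn_trans H.
  have [C S] := good_sentence (good_neg0 (good_SF l c m k0)).
  exists (cneg [::] (SF l c m #|[pred u | gcount e2 l c u == m]|)); split => //; split => //.
  by rewrite !models_neg (models_SF cov1) // (models_SF cov2) // leqnn -ltnNge H.
Qed.
End Fwd.

Unset Implicit Arguments.

Theorem mainTheorem5 (T1 T2 : finType) (e1 : rel T1) (e2 : rel T2) :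
  simple_graph_noiso e1 -> simple_graph_noiso e2 ->
  (EB_distinguishable e1 e2 <-> CFOC3_distinguishable e1 e2).
Proof.
move=> G1 G2; split; [exact: dir_fwd|exact: dir_back].
Qed.
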